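(* Let $q$ be a prime power and $n$ a positive integer. Let $g, h\in \mathbb{F}_q[x]$ with $g(x)$ a divisor of $x^n-1$, let $f\in\mathbb{F}_{q^n}[x]$, and let $P(x)=f(L_g(x))+L_h(x)$. Suppose that $L_g(f(L_g(y)))=0$ for every $y\in \mathbb{F}_{q^n}$. Then $P$ is a permutation polynomial of $\mathbb{F}_{q^n}$ if and only if $\gcd(x^n-1, h(x))=1$. Moreover, the hypothesis $L_g(f(L_g(y)))=0$ for all $y\in\mathbb{F}_{q^n}$ holds, for instance, whenever $f(x)=L_G(f_0(x))$ for some $f_0\in \mathbb{F}_{q^n}[x]$, where $G(x)=\frac{x^n-1}{g(x)}$.
   Context: For a polynomial $u(x)=\sum_{i=0}^m a_i x^i\in\mathbb{F}_q[x]$, its linearized $q$-associate is $L_u(x)=\sum_{i=0}^m a_i x^{q^i}$. A permutation polynomial of $\mathbb{F}_{q^n}$ is a polynomial inducing a bijection of $\mathbb{F}_{q^n}$. *)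

(* Defs.v *)
From HB Require Import structures.
From mathcomp Require Import all_boot all_order all_algebra all_field.
Set Implicit Arguments. Unset Strict Implicit. Unset Printing Implicit Defensive.
Import GRing.Theory.
Local Open Scope ring_scope.

(* F plays the role of F_q (q = #|F|), L the role of F_{q^n}, a field
   extension of F of dimension n. *)
Definition linq (F : finFieldType) (L : fieldExtType F) (u : {poly F}) : {poly L} :=
  \sum_(i < size u) (u`_i)%:A *: 'X^(#|F| ^ i)%N.

(* Main.v *)
Require Import Defs.
From HB Require Import structures.
From mathcomp Require Import all_boot all_order all_fingroup all_solvable all_algebra all_field.
Set Implicit Arguments. Unset Strict Implicit. Unset Printing Implicit Defensive.
Import GRing.Theory.
Local Open Scope ring_scope.
Import FalgLfun.

Section S.
Variables (F : finFieldType) (L : fieldExtType F).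

Lemma pchar_card : [pchar L].-nat #|F|.
Proof.
have [p pp pF] := finPcharP F.
have pL : p \in [pchar L] by rewrite (fmorph_pchar (in_alg L)).
have := abelem_pgroup (fin_ring_pchar_abelem pF).
rewrite /pgroup cardsT => H.
apply: sub_in_pnat H => r _; rewrite inE => /eqP ->. done.
Qed.

Definition frob (x : L) : L := x ^+ #|F|.

Lemma frob_linear : linear frob.
Proof.
move=> a x y; rewrite /frob exprDn_pchar ?pchar_card //.
congr (_ + _).
rewrite -(mulr_algl a x) -(mulr_algl a (x ^+ #|F|)) exprMn.
by rewrite -(rmorphXn (in_alg L)) /= expf_card.
Qed.

HB.instance Definition _ := GRing.isLinear.Build F L L *:%R frob frob_linear.

Definition sig : 'End(L) := linfun frob.
Definition T (u : {poly F}) : 'End(L) := horner_alg sig u.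

Lemma sigX_eval i x : (sig ^+ i) x = iter i frob x.
Proof.
elim: i x => [|i IH] x; first by rewrite expr0 lfunE.
by rewrite exprS lfun_mulE IH iterSr lfunE.
Qed.

Lemma T_eval u x : T u x = \sum_(i < size u) u`_i *: iter i frob x.
Proof.
rewrite /T -{1}[u]coefK poly_def rmorph_sum sum_lfunE; apply: eq_bigr => i _.
by rewrite -mul_polyC rmorphM /= horner_algC -scalerAl mul1r rmorphXn /= horner_algX scale_lfunE sigX_eval.
Qed.

Lemma iter_frob i x : iter i frob x = x ^+ (#|F| ^ i).
Proof.
elim: i => [|i IH]; first by rewrite expr1.
by rewrite iterS IH /frob -exprM expnSr.
Qed.

Lemma linq_eval u x : (linq L u).[x] = T u x.
Proof.
rewrite T_eval /linq horner_sum; apply: eq_bigr => i _.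
by rewrite hornerZ hornerXn mulr_algl iter_frob.
Qed.

Lemma T_mul u v x : T (u * v) x = T u (T v x).
Proof. by rewrite /T mulrC (rmorphM (horner_alg sig)) /= lfun_mulE. Qed.


Lemma T_add u v x : T (u + v) x = T u x + T v x.
Proof. by rewrite /T rmorphD add_lfunE. Qed.

Lemma T_one x : T 1 x = x.
Proof. by rewrite /T rmorph1 id_lfunE. Qed.

Local Notation fT := (finvect_type L).

Lemma card_fT n : \dim {:L} = n -> #|fT| = (#|F| ^ n)%N.
Proof. move=> hd; rewrite -(@card_vspacef F fT (Vector.class (fT : vectType F))) card_vspace; congr (_ ^ _)%N; exact: hd. Qed.

Lemma fermat n (x : L) : \dim {:L} = n -> x ^+ (#|F| ^ n) = x.
Proof.
move=> hd; have := @expf_card (FinFieldExtType L) x.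
rewrite -(card_fT hd). done.
Qed.

Lemma T_N n x : \dim {:L} = n -> T ('X^n - 1) x = 0.
Proof.
move=> hd; rewrite /T rmorphB rmorphXn rmorph1 /= horner_algX.
by rewrite add_lfunE opp_lfunE id_lfunE sigX_eval iter_frob fermat // subrr.
Qed.

Lemma coef_linq e j : (linq L e)`_j = \sum_(i < size e) (e`_i)%:A * ((j == #|F| ^ i)%N)%:R.
Proof. by rewrite /linq coef_sum; apply: eq_bigr => i _; rewrite coefZ coefXn. Qed.


Lemma T_nonzero (n : nat) (e : {poly F}) : \dim {:L} = n -> e != 0 -> (size e <= n)%N ->
  exists x : L, T e x != 0.
Proof.
move=> hd e0 se.
have [x hx|all0] := pickP (fun x : fT => T e x != 0); first by exists x.
set P := linq L e.
have q1 : (1 < #|F|)%N := finNzRing_gt1 F.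
have [m sm] : exists m, size e = m.+1.
  by exists (size e).-1; rewrite prednK // size_poly_gt0.
have cm : P`_(#|F| ^ m) = (lead_coef e)%:A.
  rewrite /P coef_linq sm big_ord_recr /= big1 ?add0r.
    by rewrite eqxx mulr1 lead_coefE sm.
  move=> i _; rewrite eqn_exp2l // eq_sym.
  by rewrite (ltn_eqF (ltn_ord i)) mulr0.
have P0 : P != 0.
  apply/eqP=> P0; move: cm; rewrite P0 coef0 => /esym/eqP.
  by rewrite scaler_eq0 oner_eq0 orbF lead_coef_eq0 (negbTE e0).
have sP : (size P <= (#|F| ^ m).+1)%N.
  apply/leq_sizeP => j hj; rewrite /P coef_linq big1 // => i _.
  have : (#|F| ^ i <= #|F| ^ m)%N.
    by rewrite leq_exp2l // -ltnS -sm.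
  move=> hi; have -> : (j == #|F| ^ i)%N = false.
    by apply/negbTE; rewrite neq_ltn; apply/orP; right; apply: leq_ltn_trans hi hj.
  by rewrite mulr0.
have := max_poly_roots P0 (rs := (enum fT : seq L)).
have -> : all (root P) (enum fT : seq L).
  apply/allP => x _; rewrite /root /P linq_eval.
  by have := all0 x => /negbFE.
move=> /(_ isT) /(_ (enum_uniq _)).
have := card_fT hd; rewrite cardT => -> /leq_trans/(_ sP).
rewrite ltnS leq_exp2l // => hnm.
by move: se; rewrite sm ltnNge hnm.
Qed.


Lemma ker_h (n : nat) (h : {poly F}) : (0 < n)%N -> \dim {:L} = n ->
  ~~ coprimep ('X^n - 1) h -> exists z : L, z != 0 /\ T h z = 0.
Proof.
move=> hn hd nc.
set N : {poly F} := 'X^n - 1.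
have sN : size N = n.+1 by rewrite size_Xn_sub_1.
have N0 : N != 0 by rewrite -size_poly_eq0 sN.
set d := gcdp N h.
have dN : d %| N := dvdp_gcdl N h.
have dh : d %| h := dvdp_gcdr N h.
have sd : size d != 1%N by rewrite -coprimep_def.
have d0 : d != 0.
  by apply: contraNneq N0 => d0; move: dN; rewrite d0 dvd0p.
set e := N %/ d.
have Ne : e * d = N := divpK dN.
have e0 : e != 0 by apply: contraNneq N0 => e0; rewrite -Ne e0 mul0r.
have se : (size e <= n)%N.
  rewrite /e size_divp // sN.
  have : (0 < size d)%N by rewrite size_poly_gt0.
  move: sd; case: (size d) => [|[|k]] //= _ _.
  by rewrite subSS leq_subr.
have [x hx] := T_nonzero hd e0 se.
exists (T e x); split => //.
have hdz : T d (T e x) = 0 by rewrite -T_mul mulrC Ne T_N.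
by rewrite -(divpK dh) T_mul hdz linear0.
Qed.

End S.

Theorem proposition2p6 (F : finFieldType) (L : fieldExtType F) (n : nat)
    (g h : {poly F}) :
  (0 < n)%N -> \dim {:L} = n -> g %| 'X^n - 1 ->
  (forall f : {poly L},
     (forall y : L, (linq L g).[f.[(linq L g).[y]]] = 0) ->
     (bijective (fun x : L => (f \Po linq L g + linq L h).[x])
        <-> coprimep ('X^n - 1) h))
  /\
  (forall f0 : {poly L},
     let f := linq L (('X^n - 1) %/ g) \Po f0 in
     forall y : L, (linq L g).[f.[(linq L g).[y]]] = 0).
Proof.
move=> hn hd hg; split; last first.
  move=> f0 f y; rewrite /f horner_comp !linq_eval -T_mul mulrC divpK //.
  exact: T_N.
move=> f H.
have Pe : forall x, (f \Po linq L g + linq L h).[x] = f.[T L g x] + T L h x.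
  by move=> x; rewrite hornerD horner_comp !linq_eval.
have H' : forall y, T L g (f.[T L g y]) = 0.
  by move=> y; have := H y; rewrite !linq_eval.
have key : forall x, T L g (f.[T L g x] + T L h x) = T L h (T L g x).
  by move=> x; rewrite linearD /= H' add0r -!T_mul mulrC.
split.
- move=> bij; apply/idPn => nc.
  have [z [z0 hz]] := ker_h hn hd nc.
  have inj := bij_inj bij.
  have [gz|gz] := eqVneq (T L g z) 0.
    suff : z = 0 by move/eqP; rewrite (negbTE z0).
    by apply: inj; rewrite /= !Pe gz hz !linear0 addr0.
  set w := T L g z in gz.
  have hw : T L h w = 0 by rewrite /w -T_mul mulrC T_mul hz linear0.
  pose V := [set (T L g x : finvect_type L) | x : finvect_type L].
  pose Th := fun x : finvect_type L => (T L h x : finvect_type L).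
  have sub : V \subset Th @: V.
    apply/subsetP => v /imsetP [u _ ->].
    case: bij => Pinv PK KP.
    have -> : u = (f \Po linq L g + linq L h).[Pinv u] by rewrite KP.
    rewrite Pe key; apply/imsetP; exists (T L g (Pinv u)) => //.
    by apply/imsetP; exists (Pinv u).
  have injV : {in V &, injective Th}.
    apply/imset_injP; rewrite eqn_leq leq_imset_card /=.
    exact: subset_leq_card sub.
  have : w = 0.
    apply: injV.
    - by apply/imsetP; exists z.
    - by apply/imsetP; exists 0 => //; rewrite linear0.
    - by rewrite /Th hw linear0.
  by move/eqP; rewrite (negbTE gz).
- move=> /Bezout_eq1_coprimepP [[a b] /= hab].
  have E : forall x, x = T L b (T L h x).
    move=> x; rewrite -T_mul -{1}(T_one x) -hab T_add T_mul.
    have tn : T L ('X^n - 1) x = 0 := T_N x hd.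
    by rewrite (T_mul a) tn linear0 add0r.
  have Thinj : injective (T L h).
    by move=> x y hxy; rewrite (E x) (E y) hxy.
  have Pinj : injective (fun x : finvect_type L =>
                 ((f \Po linq L g + linq L h).[x] : finvect_type L)).
    move=> x y /=; rewrite !Pe => hxy.
    have := congr1 (T L g) hxy; rewrite !key => /Thinj gxy.
    by move: hxy; rewrite gxy => /addrI /Thinj.
  exact: (injF_bij Pinj).
Qed.
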